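(* Let $G\colon Y\to X$ be a functor such that every object of $X$ has an absolute value. Let $x_0$ be a locally initial object of $X$ and let $y_0$ be an initial object of the full subcategory $Y_G(x_0)$. Then $x_0\cong |Gy_0|$ if and only if $x_0\cong|Gy|$ for some object $y$ of $Y$.
   Context: An object $x_0$ of a category $X$ is locally initial if for every object $x$ of $X$ there exists at most one morphism $x_0\to x$. For a locally initial object $x_0$ and a functor $G\colon Y\to X$, $Y_G(x_0)$ denotes the full subcategory of $Y$ of all objects $y$ such that there exists a morphism $x_0\to Gy$. For an object $x$ of $X$, an absolute value of $x$ is a locally initial object $|x|$ of $X$ admitting a morphism $|x|\to x$ such that for every locally initial object $x_1$ admitting a morphism $x_1\to x$ there exists a morphism $x_1\to|x|$; it is unique up to isomorphism. *)

(* Defs.v *)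
Set Implicit Arguments.

Record Category : Type := {
  Ob :> Type;
  Hom : Ob -> Ob -> Type;
  idm : forall a, Hom a a;
  comp : forall a b c, Hom b c -> Hom a b -> Hom a c;
  comp_assoc : forall a b c d (f : Hom a b) (g : Hom b c) (h : Hom c d),
      comp h (comp g f) = comp (comp h g) f;
  comp_id_l : forall a b (f : Hom a b), comp (idm b) f = f;
  comp_id_r : forall a b (f : Hom a b), comp f (idm a) = f
}.

Arguments Hom {c} _ _ : rename.
Arguments idm {c} _ : rename.
Arguments comp {c a b c0} _ _ : rename.

Record Functor (Y X : Category) : Type := {
  fobj :> Y -> X;
  fmap : forall a b, Hom a b -> Hom (fobj a) (fobj b);
  fmap_id : forall a, fmap a a (idm a) = idm (fobj a);
  fmap_comp : forall a b c (f : Hom a b) (g : Hom b c),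
      fmap a c (comp g f) = comp (fmap b c g) (fmap a b f)
}.

Definition isomorphic {C : Category} (a b : C) : Prop :=
  exists (f : Hom a b) (g : Hom b a), comp g f = idm a /\ comp f g = idm b.

Definition locally_initial {C : Category} (x0 : C) : Prop :=
  forall (x : C) (f g : Hom x0 x), f = g.

Definition is_absolute_value {C : Category} (x a : C) : Prop :=
  locally_initial a /\ inhabited (Hom a x) /\
  forall x1 : C, locally_initial x1 -> inhabited (Hom x1 x) -> inhabited (Hom x1 a).

(* objects of the full subcategory Y_G(x0) *)
Definition in_YG {Y X : Category} (G : Functor Y X) (x0 : X) (y : Y) : Prop :=
  inhabited (Hom x0 (G y)).

(* y0 is initial in the full subcategory Y_G(x0) (full: same hom-sets) *)
Definition initial_in_YG {Y X : Category} (G : Functor Y X) (x0 : X) (y0 : Y) : Prop :=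
  in_YG G x0 y0 /\
  forall y : Y, in_YG G x0 y ->
    inhabited (Hom y0 y) /\ forall f g : Hom y0 y, f = g.

(* Main.v *)
Require Import Defs.

Theorem proposition2p13 (Y X : Category) (G : Functor Y X)
  (abs : X -> X) (habs : forall x : X, is_absolute_value x (abs x))
  (x0 : X) (hx0 : locally_initial x0)
  (y0 : Y) (hy0 : initial_in_YG G x0 y0) :
  isomorphic x0 (abs (G y0)) <-> exists y : Y, isomorphic x0 (abs (G y)).
Proof.
  split.
  - intros H. exists y0. exact H.
  - intros [y [f [g [Hfg Hgf]]]].
    destruct (habs (G y)) as [Ly [[py] Uy]].
    destruct (habs (G y0)) as [L0 [[p0] U0]].
    destruct hy0 as [[a] Hin].
    destruct (Hin y (inhabits (comp py f))) as [[h] _].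
    destruct (U0 x0 hx0 (inhabits a)) as [u].
    destruct (Uy (abs (G y0)) L0 (inhabits (comp (fmap G _ _ h) p0))) as [v].
    exists u, (comp g v). split.
    + apply hx0.
    + apply L0.
Qed.
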